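(* Let $A_1$ and $A_2$ be finite-dimensional simple evolution algebras over a field $\mathbb{K}$ with associated directed graphs $E$ and $F$ (relative to natural bases). Let $d_1$ (resp. $d_2$) be the greatest common divisor of the lengths of all closed paths in $E$ (resp. $F$). Then: \begin{enumerate} \item[(i)] The evolution algebra $A_1\otimes A_2$ is simple if and only if $\gcd(d_1,d_2)=1$. In particular, if $E$ and $F$ have closed paths of coprime lengths, then $A_1\otimes A_2$ is simple. \item[(ii)] The evolution algebra $A_1\otimes A_2$ is semisimple, i.e. a direct sum of simple evolution algebras. \end{enumerate}
   Context: An evolution algebra over $\mathbb{K}$ is a $\mathbb{K}$-algebra with a basis $\{e_1,\dots,e_n\}$ (natural basis) such that $e_ie_j=0$ for $i\ne j$; its structure matrix $(\omega_{ij})$ is given by $e_i^2=\sum_j\omega_{ji}e_j$. Its associated directed graph relative to this basis has vertex set $\{1,\dots,n\}$ and an edge from $i$ to $j$ whenever $\omega_{ji}\neq0$. A path is a finite sequence of edges $f_1\cdots f_m$ with the range of $f_i$ equal to the source of $f_{i+1}$; it is closed if its range equals its source; its length is $m$. The tensor product $A_1\otimes A_2$ of evolution algebras with natural bases $\{a_i\}$, $\{b_p\}$ is an evolution algebra with natural basis $\{a_i\otimes b_p\}$ and product $(a\otimes b)(a'\otimes b')=aa'\otimes bb'$. A $\mathbb{K}$-algebra is simple if $A^2\neq 0$ and its only ideals are $0$ and $A$. *)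

(* Defs.v *)
From HB Require Import structures.
From mathcomp Require Import all_boot all_order all_algebra.
Set Implicit Arguments.
Unset Strict Implicit.
Unset Printing Implicit Defensive.
Import GRing.Theory.
Local Open Scope ring_scope.

Section AlgebraNotions.
Variables (K : fieldType) (V : lmodType K) (mul : V -> V -> V).

Definition is_subspace (S : V -> Prop) : Prop :=
  [/\ S 0, (forall x y, S x -> S y -> S (x + y))
        & (forall (a : K) x, S x -> S (a *: x))].

Definition is_ideal_in (J S : V -> Prop) : Prop :=
  [/\ is_subspace S, (forall x, S x -> J x)
    & (forall x y, J x -> S y -> S (mul x y) /\ S (mul y x))].

Definition is_ideal (S : V -> Prop) : Prop := is_ideal_in (fun _ => True) S.

Definition simple_in (J : V -> Prop) : Prop :=
  (exists x y, [/\ J x, J y & mul x y <> 0]) /\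
  (forall S, is_ideal_in J S ->
     (forall x, S x -> x = 0) \/ (forall x, J x -> S x)).

Definition simple_algebra : Prop := simple_in (fun _ => True).

Definition evolution_in (J : V -> Prop) : Prop :=
  exists (m : nat) (b : 'I_m -> V),
    [/\ (forall t, J (b t)),
        (forall c : 'I_m -> K, \sum_(t < m) c t *: b t = 0 -> forall t, c t = 0),
        (forall x, J x -> exists c : 'I_m -> K, x = \sum_(t < m) c t *: b t)
      & (forall s t, s != t -> mul (b s) (b t) = 0)].

Definition direct_sum_decomposition (k : nat) (J : 'I_k -> V -> Prop) : Prop :=
  [/\ (forall t, is_ideal (J t)),
      (forall x, exists y : 'I_k -> V, (forall t, J t (y t)) /\ x = \sum_(t < k) y t)
    & (forall y : 'I_k -> V, (forall t, J t (y t)) ->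
         \sum_(t < k) y t = 0 -> forall t, y t = 0)].

Definition semisimple_evolution : Prop :=
  exists (k : nat) (J : 'I_k -> V -> Prop),
    direct_sum_decomposition J /\ (forall t, simple_in (J t) /\ evolution_in (J t)).

End AlgebraNotions.

(* ---------- Evolution algebras given by a natural basis indexed by a
   finite type I and structure matrix W: e_i^2 = \sum_j W j i e_j.
   The algebra is K^I = {ffun I -> K^o}, e_i the i-th unit vector, so
   (x y)_j = \sum_i W j i x_i y_i. ---------- *)
Section Evolution.
Variables (K : fieldType).

Definition evo_mul (I : finType) (W : I -> I -> K) (x y : {ffun I -> K^o})
  : {ffun I -> K^o} := [ffun j => \sum_i W j i * (x i * y i)].

Definition evo_simple (I : finType) (W : I -> I -> K) : Prop :=
  @simple_algebra K {ffun I -> K^o} (evo_mul W).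

Definition evo_semisimple (I : finType) (W : I -> I -> K) : Prop :=
  @semisimple_evolution K {ffun I -> K^o} (evo_mul W).

(* structure matrix of the tensor product w.r.t. the natural basis
   a_i (x) b_p: (a_i (x) b_p)^2 = \sum_{j,q} W1 j i W2 q p (a_j (x) b_q) *)
Definition evo_tensor (I1 I2 : finType) (W1 : I1 -> I1 -> K) (W2 : I2 -> I2 -> K)
  : (I1 * I2)%type -> (I1 * I2)%type -> K :=
  fun jq ip => W1 jq.1 ip.1 * W2 jq.2 ip.2.

Definition evo_edge (I : finType) (W : I -> I -> K) (i j : I) : Prop := W j i <> 0.

Definition closed_path_length (I : finType) (W : I -> I -> K) (m : nat) : Prop :=
  exists v : nat -> I,
    [/\ (0 < m)%N, v m = v 0%N
      & forall k, (k < m)%N -> evo_edge W (v k) (v k.+1)].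

End Evolution.

Definition is_gcd_of (P : nat -> Prop) (d : nat) : Prop :=
  (forall m, P m -> (d %| m)%N) /\
  (forall e, (forall m, P m -> (e %| m)%N) -> (e %| d)%N).

(* Main.v *)
Set Warnings "-notation-overridden,-ambiguous-paths,-deprecated".
Require Import Defs.
From HB Require Import structures.
From mathcomp Require Import all_boot all_order all_algebra.
From Stdlib Require Import Classical ClassicalEpsilon.
From mathcomp Require Import ring zify.
Set Implicit Arguments. Unset Strict Implicit.
Import GRing.Theory.
Local Open Scope ring_scope.

Inductive walk {V : Type} (e : V -> V -> Prop) : V -> V -> nat -> Prop :=
| walk0 v : walk e v v 0
| walkS u v w n : e u v -> walk e v w n -> walk e u w n.+1.

Section Walks.
Variables (V : Type) (e : V -> V -> Prop).

Lemma walk_cat u v w a b : walk e u v a -> walk e v w b -> walk e u w (a + b).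
Proof.
elim=> [//|x y z n Exy _ IH] Hb; rewrite addSn; exact: walkS (IH Hb).
Qed.

Lemma walk1 u v : e u v -> walk e u v 1.
Proof. by move=> H; apply: walkS H (walk0 _ _). Qed.

Lemma walk_snoc u v w n : walk e u v n -> e v w -> walk e u w n.+1.
Proof. by move=> H1 H2; rewrite -addn1; apply: walk_cat H1 (walk1 H2). Qed.

Lemma walkS_inv u w n : walk e u w n.+1 -> exists v, e u v /\ walk e v w n.
Proof. by move=> H; inversion H; subst; eauto. Qed.

Lemma walk0_inv u w : walk e u w 0 -> u = w.
Proof. by move=> H; inversion H. Qed.

Lemma walk_fun u w n : walk e u w n <->
  exists f : nat -> V, [/\ f 0%N = u, f n = w & forall k, (k < n)%N -> e (f k) (f k.+1)].
Proof.
split.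
  elim=> [v|x y z m Exy _ [g [g0 gm gE]]].
    by exists (fun _ => v).
  exists (fun k => if k is k'.+1 then g k' else x); split=> //.
  by case=> [|k] /=; rewrite ltnS => Hk; [rewrite g0 | apply: gE].
elim: n u => [|n IH] u [f [f0 fn fE]].
  by rewrite -f0 -fn; apply: walk0.
apply: (walkS (v := f 1%N)); first by rewrite -f0; apply: fE.
apply: IH; exists (fun k => f k.+1); split=> // k Hk; exact: fE.
Qed.
End Walks.
Section Closed.
Variables (K : fieldType) (I : finType) (W : I -> I -> K).
Lemma closedP m : closed_path_length W m <-> (0 < m)%N /\ exists v, walk (evo_edge W) v v m.
Proof.
split.
  case=> f [m0 fm fE]; split=> //; exists (f 0%N); apply/walk_fun.
  by exists f; split.
case=> m0 [v /walk_fun [f [f0 fm fE]]]; exists f; split=> //; by rewrite fm f0.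
Qed.
End Closed.

Section Tensor.
Variables (K : fieldType) (I1 I2 : finType) (W1 : I1 -> I1 -> K) (W2 : I2 -> I2 -> K).
Lemma tensor_edge x y : evo_edge (evo_tensor W1 W2) x y <->
   evo_edge W1 x.1 y.1 /\ evo_edge W2 x.2 y.2.
Proof.
rewrite /evo_edge /evo_tensor; split.
  by move=> H; split=> H'; apply: H; rewrite H' ?mul0r ?mulr0.
case=> H1 H2 H; move/eqP: H; rewrite mulf_eq0 => /orP[] /eqP //.
Qed.

Lemma tensor_walk x y n : walk (evo_edge (evo_tensor W1 W2)) x y n <->
   walk (evo_edge W1) x.1 y.1 n /\ walk (evo_edge W2) x.2 y.2 n.
Proof.
split.
  elim=> [v|u v w m /tensor_edge [E1 E2] _ [IH1 IH2]]; first by split; apply: walk0.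
  by split; [apply: walkS E1 IH1 | apply: walkS E2 IH2].
case: x y => [i p] [j q] /= [H1]; elim: H1 p => [v|u v w m E1 _ IH] p.
  by move=> H; rewrite (walk0_inv H); apply: walk0.
move=> H; have [p' [E2 H2]] := walkS_inv H; apply: (walkS (v := (v, p'))); last exact: IH.
by apply/tensor_edge.
Qed.
End Tensor.
Section Alg.
Variables (K : fieldType) (V : finType) (W : V -> V -> K).
Local Notation A := {ffun V -> K^o}.
Local Notation mul := (evo_mul W).

Definition unitv (u : V) : A := [ffun v => (v == u)%:R].
Definition colv (i : V) : A := [ffun j => W j i].

Lemma scaleE (a : K) (f : A) v : (a *: f) v = a * f v.
Proof. by rewrite ffunE. Qed.

Lemma mulC x y : mul x y = mul y x.
Proof. by apply/ffunP=> j; rewrite !ffunE; apply: eq_bigr=> i _; rewrite (mulrC (x i)). Qed.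

Lemma mul_unit_l i x : mul (unitv i) x = x i *: colv i.
Proof.
apply/ffunP=> j; rewrite !ffunE (bigD1 i) //= big1 ?addr0.
  by rewrite ffunE eqxx mul1r mulrC.
by move=> k /negbTE; rewrite ffunE => ->; rewrite mul0r mulr0.
Qed.

Lemma subspace_sum (J : finType) (S : A -> Prop) (P : pred J) (F : J -> A) :
  is_subspace S -> (forall i, P i -> S (F i)) -> S (\sum_(i | P i) F i).
Proof. by case=> S0 SD SZ HF; apply: big_ind. Qed.

Lemma unit_decomp (x : A) : x = \sum_v x v *: unitv v.
Proof.
apply/ffunP=> j; rewrite sum_ffunE (bigD1 j) //= big1 ?addr0.
  by rewrite scaleE ffunE eqxx mulr1.
by move=> k /negbTE Hk; rewrite scaleE ffunE eq_sym Hk mulr0.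
Qed.

Lemma ffun_neq0 (x : A) : x <> 0 -> exists i, x i <> 0.
Proof.
move=> Hx; apply: NNPP => H; apply: Hx; apply/ffunP=> i; rewrite ffunE.
by apply: NNPP => Hi; apply: H; exists i.
Qed.

Lemma sum_neq0 (F : V -> K) : \sum_i F i <> 0 -> exists i, F i <> 0.
Proof.
move=> Hs; apply: NNPP => H; apply: Hs; apply: big1 => i _.
by apply: NNPP => Hi; apply: H; exists i.
Qed.

Definition spans (C : pred V) :=
  forall j, C j -> exists c : V -> K, (forall i, ~~ C i -> c i = 0) /\
     forall j', (j' == j)%:R = \sum_i W j' i * c i.

Lemma simple_suff (C : pred V) (J : A -> Prop) :
  (forall x, J x <-> forall v, ~~ C v -> x v = 0) ->
  (forall i j, W j i != 0 -> C i = C j) ->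
  (forall i j, C i -> C j -> exists n, walk (evo_edge W) i j n) ->
  spans C -> (exists j, C j) ->
  simple_in mul J.
Proof.
move=> HJ Hedge Hconn Hspan [j0 Cj0].
have Junit i : C i -> J (unitv i).
  by move=> Ci; apply/HJ=> v Cv; rewrite ffunE; case: eqP => // E; rewrite E Ci in Cv.
split.
  have [c [c0 cE]] := Hspan j0 Cj0.
  have := cE j0; rewrite eqxx => E.
  have [i Hi] : exists i, W j0 i * c i <> 0.
    by apply: sum_neq0; rewrite -E; apply/eqP; rewrite oner_eq0.
  have Ci : C i.
    by apply: contraT => Ci; move: Hi; rewrite c0 ?mulr0.
  exists (unitv i), (unitv i); split; try exact: Junit.
  rewrite mul_unit_l ffunE eqxx scale1r => /ffunP /(_ j0); rewrite !ffunE => H.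
  by apply: Hi; rewrite H mul0r.
move=> S [[S0 SD SZ] SJ SM].
case: (classic (exists x, S x /\ x <> 0)) => [[x [Sx x0]]|H]; last first.
  left=> x Sx; apply: NNPP => x0; apply: H; by exists x.
right.
have [i xi] := ffun_neq0 x0.
have Ci : C i by apply: contraT => Ci; exfalso; apply: xi; apply: (proj1 (HJ x) (SJ _ Sx)).
have Scol : S (colv i).
  have := proj1 (SM _ _ (Junit _ Ci) Sx); rewrite mul_unit_l => /(SZ (x i)^-1).
  by rewrite scalerA mulVf ?scale1r //; apply/eqP.
have Scols j : C j -> S (colv j).
  move=> Cj; have [n Hw] := Hconn i j Ci Cj.
  elim: Hw Ci Scol {Cj} => // u v w m Euv _ IH Cu Su.
  have Cv : C v by rewrite -(Hedge u v) //; apply/eqP.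
  apply: IH => //.
  have := proj1 (SM _ _ (Junit _ Cv) Su); rewrite mul_unit_l ffunE => /(SZ (W v u)^-1).
  by rewrite scalerA mulVf ?scale1r //; apply/eqP.
have Sunit j : C j -> S (unitv j).
  move=> Cj; have [c [c0 cE]] := Hspan j Cj.
  have -> : unitv j = \sum_i c i *: colv i.
    by apply/ffunP=> j'; rewrite sum_ffunE ffunE cE; apply: eq_bigr=> k _; rewrite scaleE ffunE mulrC.
  apply: subspace_sum => // k _; case Ck: (C k); first by apply: SZ; apply: Scols.
  by rewrite c0 ?Ck // scale0r.
move=> y Jy; rewrite (unit_decomp y); apply: subspace_sum => // v _.
case Cv: (C v); first by apply: SZ; apply: Sunit.
by rewrite (proj1 (HJ y) Jy v) ?Cv // scale0r.
Qed.
End Alg.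
Section Nec.
Variables (K : fieldType) (V : finType) (W : V -> V -> K).
Local Notation A := {ffun V -> K^o}.
Local Notation mul := (evo_mul W).

Lemma nec_ne : evo_simple W -> exists j : V, True.
Proof.
case=> [[x [y [_ _ Hxy]]] _]; have [j _] := ffun_neq0 Hxy; by exists j.
Qed.

Lemma nec_span : evo_simple W -> spans W predT.
Proof.
case=> [[x0 [y0 [_ _ H0]]] Hid] j _.
pose S (z : A) := exists c : V -> K, z = [ffun j => \sum_i W j i * c i].
have SM x y : S (mul x y) by exists (fun i => x i * y i).
have : is_ideal_in mul (fun _ => True) S.
  split; [|done|by move=> x y _ _; split].
  split.
  - by exists (fun _ => 0); apply/ffunP=> v; rewrite !ffunE big1 // => i _; rewrite mulr0.
  - move=> _ _ [c ->] [c' ->]; exists (fun i => c i + c' i); apply/ffunP=> v.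
    by rewrite !ffunE -big_split; apply: eq_bigr=> i _; rewrite mulrDr.
  - move=> a _ [c ->]; exists (fun i => a * c i); apply/ffunP=> v.
    rewrite scaleE !ffunE mulr_sumr; apply: eq_bigr=> i _; by rewrite mulrCA.
case/Hid=> [H|H].
  by exfalso; apply: H0; apply: H.
have [c cE] := H (unitv K j) I; exists c; split=> // j'.
by have := congr1 (fun f : A => f j') cE; rewrite !ffunE.
Qed.

Lemma nec_conn : evo_simple W -> forall i j, exists n, walk (evo_edge W) i j n.
Proof.
case=> _ Hid i.
pose S (z : A) := forall v, z v <> 0 -> exists n, walk (evo_edge W) i v n.
have SM x y : S y -> S (mul x y).
  move=> Sy v; rewrite ffunE => /sum_neq0 [k Hk].
  have [n Hn] : exists n, walk (evo_edge W) i k n.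
    by apply: Sy => yk; apply: Hk; rewrite yk !mulr0.
  exists n.+1; apply: walk_snoc Hn _ => Wk; apply: Hk; by rewrite Wk mul0r.
have : is_ideal_in mul (fun _ => True) S.
  split; [|done|by move=> x y _ Sy; split; [|rewrite mulC]; apply: SM].
  split.
  - by move=> v; rewrite ffunE.
  - move=> x y Sx Sy v; rewrite ffunE => H.
    case: (classic (x v = 0)) => [xv|xv]; last exact: Sx.
    by apply: Sy; rewrite xv add0r in H.
  - move=> a x Sx v; rewrite scaleE => H; apply: Sx => xv; apply: H; by rewrite xv mulr0.
case/Hid=> [H|H] j.
  have : S (unitv K i).
    move=> v; rewrite ffunE; case: eqP => [->|]; first by exists 0%N; apply: walk0.
    by rewrite /=.
  move/H/ffunP/(_ i); rewrite !ffunE eqxx => /eqP; by rewrite oner_eq0.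
by apply: (H (unitv K j) I); rewrite ffunE eqxx; apply/eqP; rewrite oner_eq0.
Qed.

Lemma in_edge : spans W predT -> forall j, exists i, evo_edge W i j.
Proof.
move=> Hs j; have [c [_ cE]] := Hs j isT.
have := cE j; rewrite eqxx => E.
have [i Hi] : exists i, W j i * c i <> 0.
  by apply: sum_neq0; rewrite -E; apply/eqP; rewrite oner_eq0.
by exists i => Wi; apply: Hi; rewrite /evo_edge in Wi; rewrite Wi mul0r.
Qed.
End Nec.
Definition pbool (P : Prop) : bool := if excluded_middle_informative P then true else false.
Lemma pboolP (P : Prop) : reflect P (pbool P).
Proof. by rewrite /pbool; case: excluded_middle_informative => H; constructor. Qed.

Section Key.
Variables (V1 V2 : Type) (e1 : V1 -> V1 -> Prop) (e2 : V2 -> V2 -> Prop) (d1 d2 : nat).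
Hypothesis sc1 : forall i j, exists n, walk e1 i j n.
Hypothesis sc2 : forall i j, exists n, walk e2 i j n.
Hypothesis in1 : forall j, exists i, e1 i j.
Hypothesis in2 : forall j, exists i, e2 i j.
Hypothesis gu1 : forall g, (forall m v, (0 < m)%N -> walk e1 v v m -> (g %| m)%N) -> (g %| d1)%N.
Hypothesis gu2 : forall g, (forall m v, (0 < m)%N -> walk e2 v v m -> (g %| m)%N) -> (g %| d2)%N.

Lemma pos_closed1 i : exists s, (0 < s)%N /\ walk e1 i i s.
Proof.
have [u Hu] := in1 i; have [n Hn] := sc1 i u; exists n.+1; split=> //.
exact: walk_snoc Hn Hu.
Qed.
Lemma pos_closed2 i : exists s, (0 < s)%N /\ walk e2 i i s.
Proof.
have [u Hu] := in2 i; have [n Hn] := sc2 i u; exists n.+1; split=> //.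
exact: walk_snoc Hn Hu.
Qed.

Lemma key i j p q a b : walk e1 i j a -> walk e2 p q b ->
  a = b %[mod gcdn d1 d2] -> exists L, walk e1 i j L /\ walk e2 p q L.
Proof.
move=> Ha Hb Hab.
pose X (z : int) := exists x y : nat, [/\ walk e1 i i x, walk e2 p p y & z = x%:Z - y%:Z].
have X0 : X 0 by exists 0%N, 0%N; split; try apply: walk0.
have XD z z' : X z -> X z' -> X (z + z').
  move=> [x [y [H1 H2 ->]]] [x' [y' [H1' H2' ->]]].
  exists (x + x')%N, (y + y')%N; split; [exact: walk_cat H1 H1'|exact: walk_cat H2 H2'|].
  rewrite !PoszD; ring.
have Xn z (n : nat) : X z -> X (z * n%:Z).
  move=> Xz; elim: n => [|n IH]; first by rewrite mulr0.
  by rewrite -addn1 PoszD mulrDr mulr1; apply: (XD).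
have [s [s0 Hs]] := pos_closed1 i.
have [t [t0 Ht]] := pos_closed2 p.
have XN z : X z -> X (- z).
  move=> [x [y [H1 H2 ->]]].
  have Xx : X x by exists x, 0%N; split; [done|apply: walk0|by rewrite subr0].
  have Xy : X (- y%:Z) by exists 0%N, y; split; [apply: walk0|done|by rewrite sub0r].
  have Xs : X s by exists s, 0%N; split; [done|apply: walk0|by rewrite subr0].
  have Xt : X (- t%:Z) by exists 0%N, t; split; [apply: walk0|done|by rewrite sub0r].
  have E1 : - x%:Z = x%:Z * (t.-1)%:Z + (- t%:Z) * x%:Z.
    have -> : (t.-1)%:Z = t%:Z - 1 by lia.
    ring.
  have E2 : y%:Z = (- y%:Z) * (s.-1)%:Z + s%:Z * y%:Z.
    have -> : (s.-1)%:Z = s%:Z - 1 by lia.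
    ring.
  have -> : - (x%:Z - y%:Z) = - x%:Z + y%:Z by ring.
  by apply: (XD); [rewrite E1 | rewrite E2]; apply: (XD); apply: (Xn).
have Xz z (k : int) : X z -> X (z * k).
  move=> Hz; case: k => n; first exact: (Xn).
  by rewrite NegzE mulrN; apply: (XN); apply: (Xn).
have exP : exists n, (0 < n)%N && pbool (X n).
  by exists s; rewrite s0; apply/pboolP; exists s, 0%N; split; [done|apply: walk0|by rewrite subr0].
case: (ex_minnP exP) => g /andP[g0 /pboolP Xg] gmin.
have Xdiv z : X z -> exists k, z = k * g%:Z.
  move=> Hz; exists (z %/ g)%Z.
  have Hg : (g%:Z != 0) by rewrite eqz_nat -lt0n.
  have Xr : X (z %% g)%Z.
    have -> : (z %% g)%Z = z + g%:Z * (- (z %/ g)%Z).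
      have E := divz_eq z g; move: E.
      set qq := (z %/ g)%Z; set rr := (z %% g)%Z => E; rewrite {1}E; ring.
    by apply: (XD) => //; apply: (Xz).
  have r0 := modz_ge0 z Hg.
  have rg : (z %% g < g)%Z by apply: ltz_pmod; rewrite ltz_nat.
  case Er: (z %% g)%Z r0 rg Xr => [n|n] // _ ng Xn'.
  case: n Er ng Xn' => [|n] Er ng Xn'.
    by rewrite {1}(divz_eq z g) Er addr0.
  have := gmin n.+1; rewrite ltz_nat in ng.
  have -> : (0 < n.+1)%N && pbool (X n.+1) by apply/andP; split=> //; apply/pboolP.
  by move=> /(_ isT); rewrite leqNgt ng.
have gdiv (m u w : nat) : (exists k, (u + w)%:Z = k * g%:Z) ->
    (exists k, (u + m + w)%:Z = k * g%:Z) -> (g %| m)%N.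
  move=> [k Ek] [k' Ek'].
  have : (g%:Z %| m%:Z)%Z.
    apply/dvdzP; exists (k' - k); rewrite mulrBl -Ek -Ek' !PoszD; ring.
  by rewrite dvdzE.
have g1 : (g %| d1)%N.
  apply: gu1 => m v m0 Hm.
  have [u Hu] := sc1 i v; have [w Hw] := sc1 v i.
  apply: (gdiv m u w); apply: (Xdiv).
    by exists (u + w)%N, 0%N; split; [apply: walk_cat Hu Hw | apply: walk0 | rewrite subr0].
  exists (u + m + w)%N, 0%N; split; [|apply: walk0 | by rewrite subr0].
  by apply: walk_cat Hw; apply: walk_cat Hu Hm.
have g2 : (g %| d2)%N.
  apply: gu2 => m v m0 Hm.
  have [u Hu] := sc2 p v; have [w Hw] := sc2 v p.
  have H z : X (- z) -> exists k, z = k * g%:Z.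
    by move/Xdiv=> [k Ek]; exists (- k); rewrite mulNr -Ek opprK.
  apply: (gdiv m u w); apply: H.
    by exists 0%N, (u + w)%N; split; [apply: walk0 | apply: walk_cat Hu Hw | rewrite sub0r].
  exists 0%N, (u + m + w)%N; split; [apply: walk0| |by rewrite sub0r].
  by apply: walk_cat Hw; apply: walk_cat Hu Hm.
have gd : (g %| gcdn d1 d2)%N by rewrite dvdn_gcd g1 g2.
have Habg : a = b %[mod g] by rewrite -(modn_dvdm a gd) Hab modn_dvdm.
have XD' : X (b%:Z - a%:Z).
  have Ea := divn_eq a g; have Eb := divn_eq b g.
  have -> : b%:Z - a%:Z = g%:Z * ((b %/ g)%:Z - (a %/ g)%:Z).
    rewrite {1}Eb {1}Ea Habg !PoszD !PoszM; ring.
  exact: (Xz).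
case: XD' => x [y [Hx Hy Exy]].
exists (x + a)%N; split; first exact: walk_cat Hx Ha.
have -> : (x + a = y + b)%N.
  apply/eqP; rewrite -eqz_nat !PoszD; apply/eqP.
  have E : x%:Z = b%:Z - a%:Z + y%:Z by rewrite Exy; ring.
  by rewrite E; ring.
exact: walk_cat Hy Hb.
Qed.
End Key.
Section Main.
Variables (K : fieldType) (I1 I2 : finType)
    (W1 : I1 -> I1 -> K) (W2 : I2 -> I2 -> K) (d1 d2 : nat).
Hypotheses (H1 : evo_simple W1) (H2 : evo_simple W2)
  (Hd1 : is_gcd_of (closed_path_length W1) d1)
  (Hd2 : is_gcd_of (closed_path_length W2) d2).

Local Notation WT := (evo_tensor W1 W2).
Local Notation VT := (prod I1 I2).

Lemma spanT : spans WT predT.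
Proof.
case=> j1 j2 _.
have [c1 [_ cE1]] : exists c, _ := (nec_span H1 (isT : predT j1)).
have [c2 [_ cE2]] : exists c, _ := (nec_span H2 (isT : predT j2)).
exists (fun x => c1 x.1 * c2 x.2); split=> // [[a b]].
have -> : \sum_(x : VT) WT (a, b) x * (c1 x.1 * c2 x.2) =
   (\sum_i W1 a i * c1 i) * (\sum_p W2 b p * c2 p).
  rewrite big_distrlr pair_big /=; apply: eq_bigr => [[i p]] _ /=.
  by rewrite /evo_tensor /=; ring.
by rewrite -cE1 -cE2 xpair_eqE; case: (a == j1); case: (b == j2); rewrite /= ?mulr0 ?mul0r ?mulr1.
Qed.

Lemma dvd_closed1 i L : walk (evo_edge W1) i i L -> (d1 %| L)%N.
Proof.
case: L => [|L] H; first exact: dvdn0.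
by apply: (proj1 Hd1); apply/closedP; split=> //; exists i.
Qed.
Lemma dvd_closed2 i L : walk (evo_edge W2) i i L -> (d2 %| L)%N.
Proof.
case: L => [|L] H; first exact: dvdn0.
by apply: (proj1 Hd2); apply/closedP; split=> //; exists i.
Qed.

Lemma keyT i j p q a b : walk (evo_edge W1) i j a -> walk (evo_edge W2) p q b ->
  a = b %[mod gcdn d1 d2] -> exists L, walk (evo_edge WT) (i, p) (j, q) L.
Proof.
move=> Ha Hb Hab.
have s1 := nec_conn H1; have s2 := nec_conn H2.
have i1 := in_edge (nec_span H1); have i2 := in_edge (nec_span H2).
have g1 : forall g, (forall m v, (0 < m)%N -> walk (evo_edge W1) v v m -> (g %| m)%N) -> (g %| d1)%N.
  move=> g Hg; apply: (proj2 Hd1) => m /closedP [m0 [v Hv]]; exact: Hg Hv.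
have g2 : forall g, (forall m v, (0 < m)%N -> walk (evo_edge W2) v v m -> (g %| m)%N) -> (g %| d2)%N.
  move=> g Hg; apply: (proj2 Hd2) => m /closedP [m0 [v Hv]]; exact: Hg Hv.
have [L [L1 L2]] := key s1 s2 i1 i2 g1 g2 Ha Hb Hab.
by exists L; apply/tensor_walk.
Qed.

Lemma part1 : evo_simple WT <-> gcdn d1 d2 = 1%N.
Proof.
split=> [HT|Hg].
  have [i0 _] := nec_ne H1; have [p0 _] := nec_ne H2.
  have [p' Ep] := in_edge (nec_span H2) p0.
  have [L /tensor_walk [/= L1 L2]] := nec_conn HT (i0, p0) (i0, p').
  have D1 : (gcdn d1 d2 %| L)%N := dvdn_trans (dvdn_gcdl _ _) (dvd_closed1 L1).
  have D2 : (gcdn d1 d2 %| L.+1)%N := dvdn_trans (dvdn_gcdr _ _) (dvd_closed2 (walk_snoc L2 Ep)).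
  by apply/eqP; rewrite -dvdn1; rewrite -addn1 dvdn_addr in D2.
apply: (simple_suff (C := predT)) => //.
- move=> [i p] [j q] _ _.
  have [a Ha] := nec_conn H1 i j; have [b Hb] := nec_conn H2 p q.
  by apply: keyT Ha Hb _; rewrite Hg !modn1.
- exact: spanT.
- have [i0 _] := nec_ne H1; have [p0 _] := nec_ne H2; by exists (i0, p0).
Qed.

Lemma part2 : (exists m1 m2, [/\ closed_path_length W1 m1, closed_path_length W2 m2
                        & coprime m1 m2]) -> evo_simple WT.
Proof.
case=> m1 [m2 [C1 C2 Hc]]; apply/part1; apply/eqP; rewrite -dvdn1 -(eqP Hc).
rewrite dvdn_gcd; apply/andP; split.
  exact: dvdn_trans (dvdn_gcdl _ _) (proj1 Hd1 _ C1).
exact: dvdn_trans (dvdn_gcdr _ _) (proj1 Hd2 _ C2).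
Qed.
Definition erel : rel VT := fun x y => WT y x != 0.

Lemma connect_walk x y : connect erel x y <-> exists n, walk (evo_edge WT) x y n.
Proof.
split.
  case/connectP=> s; elim: s x => [|z s IH] x /=; first by move=> _ ->; exists 0%N; apply: walk0.
  case/andP=> Exz Hp Hy; have [n Hn] := IH z Hp Hy; exists n.+1.
  by apply: walkS Hn; apply/eqP.
case=> n; elim=> [v|u v w m Euv _ IH]; first exact: connect0.
by apply: connect_trans IH; apply: connect1; rewrite /erel; apply/eqP.
Qed.

Lemma sym_imp x y : connect erel x y -> connect erel y x.
Proof.
case: x y => [i p] [j q] /connect_walk [L /tensor_walk [/= L1 L2]].
have [a Ha] := nec_conn H1 j i; have [b Hb] := nec_conn H2 q p.
have D1 : (gcdn d1 d2 %| a + L)%N := dvdn_trans (dvdn_gcdl _ _) (dvd_closed1 (walk_cat Ha L1)).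
have D2 : (gcdn d1 d2 %| b + L)%N := dvdn_trans (dvdn_gcdr _ _) (dvd_closed2 (walk_cat Hb L2)).
have Hab : a = b %[mod gcdn d1 d2].
  apply/eqP; rewrite -(eqn_modDr L); apply/eqP.
  by move: D1 D2; rewrite /dvdn => /eqP -> /eqP ->.
have [n Hn] := keyT Ha Hb Hab; apply/connect_walk; by exists n.
Qed.

Lemma symT : connect_sym erel.
Proof. by move=> x y; apply/idP/idP; apply: sym_imp. Qed.

Lemma root_edge i j : WT j i != 0 -> fingraph.root erel i = fingraph.root erel j.
Proof. by move=> E; apply/(fingraph.rootP symT); apply: connect1. Qed.

Definition Cp (r : VT) : pred VT := fun v => fingraph.root erel v == r.

Lemma part3 : evo_semisimple WT.
Proof.
pose R : {pred VT} := roots erel.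
pose J (t : 'I_#|R|) (x : {ffun VT -> K^o}) := forall v, ~~ Cp (enum_val t) v -> x v = 0.
have rootR (t : 'I_#|R|) : fingraph.root erel (enum_val t) = enum_val t by apply/eqP; have := enum_valP t; rewrite unfold_in.
have rootinR v : fingraph.root erel v \in R by rewrite unfold_in /roots (fingraph.root_root symT).
exists #|R|, J; split.
  split.
  - move=> t; split; [split|done|].
    + by move=> v _; rewrite ffunE.
    + by move=> x y Jx Jy v Hv; rewrite ffunE Jx ?Jy ?addr0.
    + by move=> a x Jx v Hv; rewrite scaleE Jx ?mulr0.
    suff HM x y : J t y -> J t (evo_mul WT x y).
      by move=> x y _ Jy; split; [|rewrite mulC]; apply: HM.
    move=> Jy v Hv; rewrite ffunE big1 // => k _.
    case: (eqVneq (WT v k) 0) => [->|E]; first by rewrite mul0r.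
    rewrite Jy ?mulr0 ?mul0r //; by rewrite /Cp (root_edge E).
  - move=> x; exists (fun t => [ffun v => if Cp (enum_val t) v then x v else 0]); split.
      by move=> t v Hv; rewrite ffunE (negbTE Hv).
    apply/ffunP=> v; rewrite sum_ffunE.
    pose t0 := enum_rank_in (rootinR v) (fingraph.root erel v).
    rewrite (bigD1 t0) //= big1 ?addr0.
      by rewrite ffunE /Cp enum_rankK_in ?eqxx.
    move=> t Ht; rewrite ffunE /Cp; case: eqP => // E.
    have Et : t = t0 by apply: enum_val_inj; rewrite /t0 enum_rankK_in.
    by rewrite Et eqxx in Ht.
  - move=> y Jy Hs t; apply/ffunP=> v; rewrite ffunE.
    case Cv: (Cp (enum_val t) v); last by apply: Jy; rewrite Cv.
    have := congr1 (fun f : {ffun VT -> K^o} => f v) Hs; rewrite sum_ffunE ffunE.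
    rewrite (bigD1 t) //= big1 ?addr0 // => s Hst; apply: Jy; rewrite /Cp.
    move: Cv; rewrite /Cp => /eqP ->; apply/negP => /eqP /enum_val_inj E.
    by rewrite E eqxx in Hst.
move=> t; split.
  apply: (simple_suff (C := Cp (enum_val t))) => //.
  - by move=> i j /root_edge E; rewrite /Cp E.
  - move=> i j /eqP Ci /eqP Cj; apply/connect_walk; apply/(fingraph.rootP symT); by rewrite Ci Cj.
  - move=> j Cj; have [c [_ cE]] : exists c, _ := spanT (isT : predT j).
    exists (fun i => if Cp (enum_val t) i then c i else 0); split.
      by move=> i /negbTE ->.
    move=> j'; case Cj': (Cp (enum_val t) j').
      rewrite cE; apply: eq_bigr => i _; case Ci: (Cp (enum_val t) i) => //.
      case: (eqVneq (WT j' i) 0) => [->|E]; first by rewrite !mul0r.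
      by move: Ci Cj'; rewrite /Cp (root_edge E) => ->.
    have -> : (j' == j) = false by apply/negP => /eqP E; rewrite E Cj in Cj'.
    rewrite big1 // => i _; case Ci: (Cp (enum_val t) i); last by rewrite mulr0.
    case: (eqVneq (WT j' i) 0) => [->|E]; first by rewrite !mul0r.
    by move: Ci Cj'; rewrite /Cp (root_edge E) => ->.
  - by exists (enum_val t); rewrite /Cp rootR.
pose C := Cp (enum_val t).
have CP (s : 'I_#|C|) : Cp (enum_val t) (enum_val s) by have := enum_valP s; rewrite unfold_in.
exists #|C|, (fun s => unitv K (enum_val (A := C) s)); split.
- move=> s v Hv; rewrite ffunE; case: eqP => // E.
  by move: Hv; rewrite E CP.
- move=> c Hc s.
  have := congr1 (fun f : {ffun VT -> K^o} => f (enum_val (A := C) s)) Hc.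
  rewrite sum_ffunE ffunE (bigD1 s) //= big1 ?addr0.
    by rewrite scaleE ffunE eqxx mulr1.
  move=> s' Hs'; rewrite scaleE ffunE; case: eqP => [/enum_val_inj E|]; last by rewrite mulr0.
  by rewrite E eqxx in Hs'.
- move=> x Jx; exists (fun s => x (enum_val (A := C) s)); apply/ffunP=> v.
  rewrite sum_ffunE; case Cv: (v \in C).
    rewrite (bigD1 (enum_rank_in Cv v)) //= big1 ?addr0.
      by rewrite scaleE ffunE enum_rankK_in ?eqxx ?mulr1.
    move=> s Hs; rewrite scaleE ffunE; case: eqP => [E|]; last by rewrite mulr0.
    have Es : s = enum_rank_in Cv v by apply: enum_val_inj; rewrite enum_rankK_in.
    by rewrite Es eqxx in Hs.
  rewrite Jx; last by move: Cv; rewrite unfold_in /Cp /= => ->.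
  rewrite big1 // => s _; rewrite scaleE ffunE; case: eqP => [E|]; last by rewrite mulr0.
  by move: Cv (CP s); rewrite E unfold_in /Cp /= => ->.
- move=> s s' Hss; rewrite mul_unit_l ffunE; case: eqP => [/enum_val_inj E|_].
    by rewrite E eqxx in Hss.
  by rewrite scale0r.
Qed.
End Main.

Local Close Scope ring_scope.

Theorem theorem4p3 (K : fieldType) (I1 I2 : finType)
    (W1 : I1 -> I1 -> K) (W2 : I2 -> I2 -> K) (d1 d2 : nat) :
  evo_simple W1 -> evo_simple W2 ->
  is_gcd_of (closed_path_length W1) d1 ->
  is_gcd_of (closed_path_length W2) d2 ->
  [/\ (evo_simple (evo_tensor W1 W2) <-> gcdn d1 d2 = 1%N),
      ((exists m1 m2, [/\ closed_path_length W1 m1, closed_path_length W2 m2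
                        & coprime m1 m2]) -> evo_simple (evo_tensor W1 W2))
    & evo_semisimple (evo_tensor W1 W2)].
Proof.
move=> H1 H2 Hd1 Hd2; split.
- exact: part1 H1 H2 Hd1 Hd2.
- exact: part2 H1 H2 Hd1 Hd2.
- exact: part3 H1 H2 Hd1 Hd2.
Qed.
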